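(* Let $n\ge 2$ and $\sigma,\tau\in S_n$. Put $i=\sigma^{-1}(n-1)$, $j=\tau^{-1}(n-1)$, $a=\tau(i)$, $b=\sigma(j)$, $c=\sigma(n-1)$, $e=\tau(n-1)$, and $\Delta=\mathrm{hd}(\sigma,\tau)-\mathrm{hd}(\sigma^{\sf CT},\tau^{\sf CT})$. Then: (0) $\Delta=0$ if and only if one of the following holds: (1) $i,j,n-1$ pairwise distinct, $a\neq b$ and $c=e$; (2) $i,j,n-1$ pairwise distinct, $a=b$ and $c=e$; (3) $i=j\neq n-1$, $a=b=n-1$, $c\neq e$; (4) $i=j\neq n-1$, $a=b=n-1$, $c=e$; (5) $i=j=n-1$ and $a=b=c=e=n-1$. (I) $\Delta=1$ if and only if one of the following holds: (6) $i,j,n-1$ pairwise distinct and $a,b,c,e$ pairwise distinct; (7) $i,j,n-1$ pairwise distinct, $a=b$, $c\neq e$; (8) $i=n-1\neq j$, $a=e$, $c=n-1$, and $a,b,n-1$ pairwise distinct; (9) $j=n-1\neq i$, $b=c$, $e=n-1$, and $a,b,n-1$ pairwise distinct. (II) $\Delta=2$ if and only if one of the following holds: (10) $i,j,n-1$ pairwise distinct, $a=c$, $b\neq e$; (11) $i,j,n-1$ pairwise distinct, $a\neq c$, $b=e$; (12) $i=n-1\neq j$ and $a=b=e\neq c=n-1$; (13) $j=n-1\neq i$ and $a=b=c\neq e=n-1$. (III) $\Delta=3$ if and only if (14) $i,j,n-1$ are pairwise distinct, $a=c$ and $b=e$.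
   Context: $S_n$ is the symmetric group on $\{0,1,\ldots,n-1\}$; ${\rm hd}(\sigma,\tau)=|\{x:\sigma(x)\neq\tau(x)\}|$. The contraction of $\sigma\in S_n$ is $\sigma^{\sf CT}\in S_{n-1}$ (on $\{0,\ldots,n-2\}$) defined by $\sigma^{\sf CT}(x)=\sigma(n-1)$ if $x=\sigma^{-1}(n-1)$ and $\sigma^{\sf CT}(x)=\sigma(x)$ otherwise (i.e. delete $n-1$ from the cycle notation of $\sigma$). *)

(* Defs.v *)
From mathcomp Require Import all_boot all_order all_algebra all_fingroup.
Set Implicit Arguments. Unset Strict Implicit. Unset Printing Implicit Defensive.

(* S_n = 'S_n (permutations of 'I_n = {0,...,n-1}); here n = m.+1,
   and n-1 is ord_max : 'I_m.+1. *)

Definition hd (k : nat) (s t : 'S_k) : nat := #|[set x | s x != t x]|.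

(* contraction function: for x < m, sigma^CT(x) = sigma(m) if sigma(x) = m,
   and sigma(x) otherwise.  unlift ord_max y = Some y (as 'I_m) when y != m;
   the default branch (None) is unreachable. *)
Definition ct_fun (m : nat) (s : 'S_m.+1) (x : 'I_m) : 'I_m :=
  match unlift ord_max (s (lift ord_max x)) with
  | Some y => y
  | None => odflt x (unlift ord_max (s ord_max))
  end.

Lemma ct_funE m (s : 'S_m.+1) (x : 'I_m) :
  nat_of_ord (ct_fun s x) =
  nat_of_ord (if s (lift ord_max x) == ord_max then s ord_max else s (lift ord_max x)).
Proof.
have Hmax : s (lift ord_max x) <> s ord_max.
  by move/perm_inj/eqP; rewrite eq_sym (negbTE (neq_lift _ _)).
rewrite /ct_fun; case: unliftP => [y E|E].
  by rewrite E eq_sym (negbTE (neq_lift _ _)) lift_max.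
rewrite E eqxx; case: unliftP => [w Ew|Ew] /=; first by rewrite Ew lift_max.
by exfalso; apply: Hmax; rewrite E Ew.
Qed.

Lemma ct_fun_inj m (s : 'S_m.+1) : injective (ct_fun s).
Proof.
move=> x1 x2 /(congr1 (@nat_of_ord m)); rewrite !ct_funE => e.
apply: (@lift_inj _ ord_max); apply: (@perm_inj _ s).
case: eqP e => E1; case: eqP => E2 /= e.
- by rewrite E1 E2.
- exfalso; have: s ord_max = s (lift ord_max x2) by apply: val_inj.
  by move/perm_inj/eqP; rewrite (negbTE (neq_lift _ _)).
- exfalso; have: s (lift ord_max x1) = s ord_max by apply: val_inj.
  by move/perm_inj/eqP; rewrite eq_sym (negbTE (neq_lift _ _)).
- exact: val_inj.
Qed.

Definition contraction (m : nat) (s : 'S_m.+1) : 'S_m := perm (@ct_fun_inj m s).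

(* Main.v *)
Require Import Defs.
From mathcomp Require Import all_boot all_order all_algebra all_fingroup.
From mathcomp Require Import zify.

Lemma hd_sum k (s t : 'S_k) : hd s t = \sum_x (s x != t x : nat).
Proof.
rewrite /hd -sum1_card big_mkcond /=; apply: eq_bigr => x _.
by rewrite inE; case: (s x != t x).
Qed.

Definition Sf {m} (s : 'S_m.+1) (y : 'I_m.+1) : 'I_m.+1 :=
  if s y == ord_max then s ord_max else s y.

Lemma hd_ct m (s t : 'S_m.+1) :
  (hd (contraction s) (contraction t) + (s ord_max != t ord_max) =
  \sum_y (Sf s y != Sf t y : nat))%N.
Proof.
rewrite hd_sum big_ord_recr /=.
have -> : Sf s ord_max = s ord_max by rewrite /Sf; case: eqP.
have -> : Sf t ord_max = t ord_max by rewrite /Sf; case: eqP.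
congr (_ + _)%N; apply: eq_bigr => x _.
have E : widen_ord (leqnSn m) x = lift ord_max x by apply: val_inj => /=; rewrite /bump leqNgt ltn_ord.
rewrite E /contraction !permE.
suff -> : (ct_fun s x == ct_fun t x) = (Sf s (lift ord_max x) == Sf t (lift ord_max x)) by [].
rewrite -(inj_eq val_inj) /= !ct_funE -(inj_eq val_inj) /=.
by [].
Qed.

Lemma sum_ind (T : finType) (i : T) (K : nat) : (\sum_y ((y == i) * K) = K)%N.
Proof.
rewrite (bigD1 i) //= eqxx mul1n big1 ?addn0 // => y /negbTE ->; by rewrite mul0n.
Qed.

Lemma key m (s t : 'S_m.+1) :
  let N := (ord_max : 'I_m.+1) in
  let i := (s^-1)%g N in let j := (t^-1)%g N in
  let g y := (s y != t y : nat) in let h y := (Sf s y != Sf t y : nat) in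
  (hd s t + h i + (j != i) * h j = hd (contraction s) (contraction t) + (s N != t N) + g i + (j != i) * g j)%N.
Proof.
move=> N i j g h; rewrite hd_ct hd_sum.
rewrite -(sum_ind _ i (h i)) -(sum_ind _ i (g i)) -(sum_ind _ j ((j != i) * h j))
  -(sum_ind _ j ((j != i) * g j)) -!big_split /=.
apply: eq_bigr => y _.
have [yi|yi] := eqVneq y i; have [yj|yj] := eqVneq y j.
- have ij : j == i by rewrite -yi -yj.
  by rewrite yi ij !mul1n /g /h /= -yi; rewrite ?mul0n ?mul1n ?addn0 addnC.
- have ij : j != i by rewrite -yi eq_sym.
  by rewrite yi ij !mul1n !mul0n /g /h /= -yi; rewrite ?mul0n ?mul1n ?addn0 addnC.
- have ij : j != i by rewrite -yj.
  by rewrite yj ij !mul1n !mul0n /g /h /= -yj; rewrite ?mul0n ?mul1n ?addn0 addnC.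
- rewrite !mul0n !addn0.
  suff : Sf s y = s y /\ Sf t y = t y by case=> -> ->.
  rewrite /Sf; split; case: eqP => // H.
    by case/eqP: yi; rewrite /i /N -H permK.
  by case/eqP: yj; rewrite /j /N -H permK.
Qed.

Lemma key2 m (s t : 'S_m.+1) (N i j a b c e : 'I_m.+1) :
  N = ord_max -> i = (s^-1)%g N -> j = (t^-1)%g N -> a = t i -> b = s j ->
  c = s N -> e = t N ->
  (hd s t + (c != (if a == N then e else a)) + (j != i) * ((if b == N then c else b) != e)
   = hd (contraction s) (contraction t) + (c != e) + (N != a) + (j != i) * (b != N))%N.
Proof.
move=> EN Ei Ej Ea Eb Ec Ee.
have := key m s t => /=.
have si : s i = N by rewrite Ei permKV.
have tj : t j = N by rewrite Ej permKV.
rewrite /Sf -EN -Ei -Ej si tj eqxx -Ea -Eb -Ec -Ee.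
by [].
Qed.

Lemma facts m (s t : 'S_m.+1) (N i j a b c e : 'I_m.+1) :
  i = (s^-1)%g N -> j = (t^-1)%g N -> a = t i -> b = s j ->
  c = s N -> e = t N ->
  ((a = N <-> i = j) /\ (b = N <-> i = j) /\ (c = N <-> i = N) /\ (e = N <-> j = N) /\
      (a = e <-> i = N) /\ (b = c <-> j = N)).
Proof.
move=> Ei Ej Ea Eb Ec Ee.
have si : s i = N by rewrite Ei permKV.
have tj : t j = N by rewrite Ej permKV.
subst a b c e; do !split; move=> H.
- by rewrite Ej -H permK.
- by rewrite H.
- by rewrite Ei -H permK.
- by rewrite -H.
- by rewrite Ei -{1}H permK.
- by rewrite -{1}H.
- by rewrite Ej -{1}H permK.
- by rewrite -{1}H.
- exact: (perm_inj H).
- by rewrite H.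
- exact: (perm_inj H).
- by rewrite H.
Qed.

Ltac useF F := match type of F with (?L <-> ?R) =>
  let H := fresh "HF" in
  first [ have H : L := proj2 F ltac:(congruence)
        | have H : ~ L := fun h => ltac:(have := proj1 F h; congruence) ] end.

Ltac simplK K := repeat (progress (rewrite ?eqxx /= in K) ||
  match type of K with context [?x == ?y] =>
    let E := fresh "E" in
    first [ have E : (x == y) = false by apply/eqP; congruence
          | have E : (x == y) = true by apply/eqP; congruence ];
    rewrite E in K; clear E end).

Ltac sc := repeat match goal with |- _ /\ _ => split end; solve [ intros; congruence ].
Ltac sd := first [ sc | left; sc | right; sd ].

Theorem proposition4p2 (m : nat) (hm : (1 <= m)%N) (s t : 'S_m.+1) :
  let N := (ord_max : 'I_m.+1) in
  let i := (s^-1)%g N in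
  let j := (t^-1)%g N in
  let a := t i in
  let b := s j in
  let c := s N in
  let e := t N in
  let D : int := ((hd s t)%:Z - (hd (contraction s) (contraction t))%:Z)%R in
  let pd3 (x y z : 'I_m.+1) := x <> y /\ x <> z /\ y <> z in
  (D = 0%R <->
     (pd3 i j N /\ a <> b /\ c = e) \/
     (pd3 i j N /\ a = b /\ c = e) \/
     (i = j /\ i <> N /\ a = b /\ b = N /\ c <> e) \/
     (i = j /\ i <> N /\ a = b /\ b = N /\ c = e) \/
     (i = j /\ j = N /\ a = b /\ b = c /\ c = e /\ e = N)) /\
  (D = 1%R <->
     (pd3 i j N /\ a <> b /\ a <> c /\ a <> e /\ b <> c /\ b <> e /\ c <> e) \/
     (pd3 i j N /\ a = b /\ c <> e) \/
     (i = N /\ N <> j /\ a = e /\ c = N /\ pd3 a b N) \/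
     (j = N /\ N <> i /\ b = c /\ e = N /\ pd3 a b N)) /\
  (D = 2%R <->
     (pd3 i j N /\ a = c /\ b <> e) \/
     (pd3 i j N /\ a <> c /\ b = e) \/
     (i = N /\ N <> j /\ a = b /\ b = e /\ e <> c /\ c = N) \/
     (j = N /\ N <> i /\ a = b /\ b = c /\ c <> e /\ e = N)) /\
  (D = 3%R <-> (pd3 i j N /\ a = c /\ b = e)).
Proof.
move=> N i j a b c e D pd3.
have K := @key2 m s t N i j a b c e erefl erefl erefl erefl erefl erefl erefl.
have [F1 [F2 [F3 [F4 [F5 F6]]]]] := @facts m s t N i j a b c e erefl erefl erefl erefl erefl erefl.
have HD0 : D = ((hd s t)%:Z - (hd (contraction s) (contraction t))%:Z)%R := erefl.
unfold pd3; clear pd3; cbv beta.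
move: K HD0; clearbody N i j a b c e D.
move: (hd s t) (hd (contraction s) (contraction t)) => H1 H2 K HD0.
clear hm.
case: (eqVneq i N) => [iN|/eqP iN]; case: (eqVneq j N) => [jN|/eqP jN];
case: (eqVneq i j) => [ij|/eqP ij];
case: (eqVneq c e) => [ce|/eqP ce]; case: (eqVneq a c) => [ac|/eqP ac];
case: (eqVneq b e) => [be|/eqP be]; case: (eqVneq a b) => [ab|/eqP ab];
try (exfalso; congruence).
all: useF F1; useF F2; useF F3; useF F4; useF F5; useF F6.
all: try (exfalso; congruence).
all: simplK K.
all: first [ have HD : D = Posz 0 by lia | have HD : D = Posz 1 by lia
      | have HD : D = Posz 2 by lia | have HD : D = Posz 3 by lia ].
all: rewrite HD.
all: split; [split|split; [split|split; [split|split]]].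
all: move=> Hx.
all: try discriminate.
all: try sd.
all: try (decompose [and or] Hx; first [reflexivity | exfalso; congruence]).

Qed.
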